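(* Let $t\ge 1$ and let $K_{2*t}$ denote the complete multipartite graph with $t$ parts each of size $2$. If $G$ is a subgraph of $K_{2*t}$, then $G$ is $f$-AT for the constant function $f\equiv t$. Consequently, if $G$ is BK-free, then $G$ is not a subgraph of $K_{2*(\Delta(G)-1)}$.
   Context: For a graph $G$ and $f:V(G)\to\mathbb{Z}^+$, an orientation $D$ of $E(G)$ is an Alon--Tarsi orientation for $f$ if $d^+_D(v)<f(v)$ for every vertex $v$ and the number of spanning Eulerian subgraphs of $D$ (spanning subdigraphs in which every vertex has equal in- and out-degree) with an even number of edges differs from the number with an odd number of edges; $G$ is $f$-AT if such an orientation exists. A digraph (in which some edges may be oriented in both directions) is kernel-perfect if every induced subdigraph $D'$ has a kernel, i.e., a set $I\subseteq V(D')$ with no arc between two of its vertices such that every vertex of $D'$ not in $I$ has an out-neighbor in $I$. A graph $H$ is $f$-KP if some supergraph $H'$ of $H$ on the same vertex set (possibly with parallel edges) has a kernel-perfect orientation with $d^+(v)<f(v)$ for all $v$. A connected graph $G$ is BK-free if it has no induced subgraph $H$ that is $f_H$-AT or $f_H$-KP, where $f_H(v)=d_H(v)-1+\Delta(G)-d_G(v)$ for $v\in V(H)$. *)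

(* Defs.v *)
From mathcomp Require Import all_boot.
Set Implicit Arguments. Unset Strict Implicit. Unset Printing Implicit Defensive.

(* A finite simple graph: vertex type T : finType, adjacency e : rel T,
   assumed symmetric and irreflexive (hypotheses of the theorem).
   Induced subgraphs G[S] are described by their vertex set S : {set T}. *)

Section Graphs.
Variable T : finType.
Implicit Types (e D R : rel T) (S U I : {set T}).

Definition deg e S v : nat := #|[set u in S | e v u]|.

Definition maxdeg e : nat := \max_(v : T) deg e setT v.

Definition orientation e S D : Prop :=
  (forall x y, D x y -> [&& x \in S, y \in S & e x y]) /\
  (forall x y, x \in S -> y \in S -> e x y -> D x y != D y x).

Definition outdeg D S v : nat := #|[set u in S | D v u]|.

Definition eulerian D (A : {set T * T}) : bool :=
  (A \subset [set p | D p.1 p.2]) &&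
  [forall v, #|[set p in A | p.1 == v]| == #|[set p in A | p.2 == v]|].

Definition EE D : nat := #|[set A : {set T * T} | eulerian D A & ~~ odd #|A|]|.
Definition EO D : nat := #|[set A : {set T * T} | eulerian D A & odd #|A|]|.

Definition AT e S (f : T -> nat) : Prop :=
  exists D, orientation e S D /\
    (forall v, v \in S -> outdeg D S v < f v) /\ EE D != EO D.

Definition kernel R U I : Prop :=
  I \subset U /\
  (forall x y, x \in I -> y \in I -> ~~ R x y) /\
  (forall v, v \in U -> v \notin I -> exists2 w, w \in I & R v w).

Definition kernel_perfect R S : Prop :=
  forall U, U \subset S -> exists I, kernel R U I.

(* G[S] is f-KP: a loopless multigraph supergraph H' of G[S] on vertex set S,
   oriented; m x y = number of arcs x -> y (an edge oriented both ways is
   recorded as one arc in each direction). *)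
Definition KP e S (f : T -> nat) : Prop :=
  exists m : T -> T -> nat,
    (forall x y, 0 < m x y -> [&& x \in S, y \in S & x != y]) /\
    (forall x y, x \in S -> y \in S -> e x y -> 0 < m x y + m y x) /\
    kernel_perfect (fun x y => 0 < m x y) S /\
    (forall v, v \in S -> \sum_(y in S) m v y < f v).

(* f_H(v) = d_H(v) - 1 + Delta(G) - d_G(v); computed in nat as
   (d_H(v) + (Delta(G) - d_G(v))).-1, where Delta(G) - d_G(v) >= 0.
   The value -1 is truncated to 0, which is harmless since out-degrees
   must be < f_H(v) and no out-degree is < 0 either way. *)
Definition fH e S (v : T) : nat := (deg e S v + (maxdeg e - deg e setT v)).-1.

Definition connected_graph e : Prop :=
  0 < #|T| /\ forall x y, connect e x y.

Definition BKfree e : Prop :=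
  connected_graph e /\
  forall S, S != set0 -> ~ AT e S (fH e S) /\ ~ KP e S (fH e S).

(* G is a subgraph of K_{2*t}: injective map into t parts of size 2,
   edges only between different parts. *)
Definition subK2 e (t : nat) : Prop :=
  exists phi : T -> 'I_t * bool, injective phi /\
    forall x y, e x y -> (phi x).1 != (phi y).1.

End Graphs.

(* Main.v *)
Require Import Defs.
From mathcomp Require Import all_boot all_order all_algebra.
From mathcomp Require Import zify ring lra.
Set Implicit Arguments. Unset Strict Implicit. Unset Printing Implicit Defensive.
Import Order.TTheory GRing.Theory Num.Theory.
Local Open Scope ring_scope.
Section Lag.
Variable t : nat.
Hypothesis ht : (0 < t)%N.
Definition nR (c : 'I_t) : rat := (val c)%:R.
Definition phid (c : 'I_t) : rat := \prod_(c' : 'I_t | c' != c) (nR c - nR c').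
Definition Ssum (k : nat) : rat := \sum_(c : 'I_t) nR c ^+ k / phid c.

Lemma nR_inj : injective nR.
Proof. by move=> a b /eqP; rewrite /nR eqr_nat => /eqP/val_inj. Qed.

Lemma phid_neq0 c : phid c != 0.
Proof.
rewrite /phid; apply/prodf_neq0 => c' Hc'.
by rewrite subr_eq0; apply: contra Hc' => /eqP/nR_inj ->.
Qed.

Definition Pc (c : 'I_t) : {poly rat} := \prod_(c' : 'I_t | c' != c) ('X - (nR c')%:P).

Lemma size_Pc c : size (Pc c) = t.
Proof.
rewrite /Pc size_prod; last by move=> i _; rewrite polyXsubC_eq0.
rewrite (eq_bigr (fun _ => 2%N)); last by move=> i _; rewrite size_XsubC.
rewrite sum_nat_const cardC1 card_ord.
case: t c => [[]//|n] _ /=; lia.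
Qed.

Lemma Ssum_val k : (k <= t.-1)%N -> Ssum k = (k == t.-1)%:R.
Proof.
move=> hk.
set L := \sum_(c : 'I_t) (nR c ^+ k / phid c) *: Pc c.
have HL : L = 'X^k.
  apply/eqP; rewrite -subr_eq0; apply/eqP.
  apply: (@roots_geq_poly_eq0 _ _ [seq nR c | c <- enum 'I_t]).
  - apply/allP => x /mapP [c0 _ ->]; rewrite /root hornerD hornerN hornerXn.
    rewrite horner_sum (bigD1 c0) //= big1 ?addr0.
      rewrite hornerZ /Pc horner_prod.
      rewrite (eq_bigr (fun c' => nR c0 - nR c')); last by move=> i _; rewrite hornerXsubC.
      by rewrite -/(phid c0) mulfVK ?phid_neq0 // subrr.
    move=> c hc; rewrite hornerZ /Pc horner_prod (bigD1 c0) 1?eq_sym //=.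
    by rewrite hornerXsubC subrr mul0r mulr0.
  - by rewrite map_inj_uniq ?enum_uniq //; exact: nR_inj.
  - rewrite size_map -cardE card_ord.
    apply: (leq_trans (size_polyD _ _)); rewrite geq_max; apply/andP; split.
      apply: (leq_trans (size_sum _ _ _)); apply/bigmax_leqP => c _.
      by apply: (leq_trans (size_scale_leq _ _)); rewrite size_Pc.
    by rewrite size_polyN size_polyXn -(prednK ht) ltnS.
have := congr1 (fun p : {poly rat} => p`_(t.-1)) HL.
rewrite /= coefXn coef_sum eq_sym => <-.
apply: eq_bigr => c _; rewrite coefZ.
have : lead_coef (Pc c) = 1 by rewrite /Pc lead_coef_prod_XsubC.
by rewrite lead_coefE size_Pc => ->; rewrite mulr1.
Qed.
End Lag.
Section Expand.
Variables (I J : finType) (A : {set I}).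

Definition valid (f : {ffun I -> bool}) := [forall a, (a \notin A) ==> f a].
Definition negc (f : {ffun I -> bool}) := #|[set a in A | ~~ f a]|.

Lemma prod_count (g : I -> J) (x : J -> rat) :
  \prod_(a in A) x (g a) = \prod_(w : J) x w ^+ #|[set a in A | g a == w]|.
Proof.
rewrite (partition_big g predT) //; apply: eq_bigr => w _.
rewrite (eq_bigr (fun _ => x w)); last by move=> a /andP[_ /eqP ->].
by rewrite prodr_const; congr (_ ^+ _); apply: eq_card => a; rewrite !inE.
Qed.

Lemma prod_sign (f : {ffun I -> bool}) (y z : I -> rat) :
  \prod_(a in A) (if f a then y a else - z a) =
  (-1) ^+ negc f * \prod_(a in A) (if f a then y a else z a).
Proof.
rewrite (eq_bigr (fun a => (if f a then 1 else -1) * (if f a then y a else z a))); last first.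
  by move=> a _; case: (f a); rewrite ?mul1r ?mulN1r.
rewrite big_split /=; congr (_ * _).
rewrite (eq_bigr (fun a => if ~~ f a then -1 else 1)); last by move=> a _; case: (f a).
rewrite -big_mkcondr prodr_const /negc; congr (_ ^+ _).
by apply: eq_card => a; rewrite !inE.
Qed.

Lemma expand (h1 h2 : I -> J) (x : J -> rat) :
  \prod_(a in A) (x (h1 a) - x (h2 a)) =
  \sum_(f | valid f) (-1) ^+ negc f *
     \prod_(w : J) x w ^+ #|[set a in A | (if f a then h1 a else h2 a) == w]|.
Proof.
pose F a (b : bool) := if a \in A then (if b then x (h1 a) else - x (h2 a))
                       else (if b then 1 else 0).
transitivity (\prod_(a : I) \sum_(b : bool) F a b).
  rewrite big_mkcond; apply: eq_bigr => a _.
  by rewrite big_bool /F; case: (a \in A) => //=; rewrite ?addr0.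
rewrite bigA_distr_bigA /= (bigID valid) /= addrC big1 ?add0r; last first.
  move=> f; rewrite /valid negb_forall => /existsP [a Ha].
  rewrite (bigD1 a) //= /F; move: Ha; rewrite negb_imply => /andP[/negbTE -> /negbTE ->].
  by rewrite mul0r.
apply: eq_bigr => f Hf.
idtac.
rewrite -[in RHS]prod_count.
have E : \prod_(a in A) x (if f a then h1 a else h2 a) = \prod_(a in A) (if f a then x (h1 a) else x (h2 a)).
  by apply: eq_bigr => a _; case: (f a).
rewrite E.
rewrite -prod_sign [RHS]big_mkcond /=.
apply: eq_bigr => a _; rewrite /F; case: ifP => //= Ha.
by move/forallP: Hf => /(_ a); rewrite Ha /= => ->.
Qed.

End Expand.
Local Close Scope ring_scope.

Lemma card_or (T : finType) (P Q : pred T) :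
  (forall u, P u -> ~~ Q u) ->
  #|[set u | P u || Q u]| = (#|[set u | P u]| + #|[set u | Q u]|)%N.
Proof.
move=> H.
have -> : [set u | P u || Q u] = [set u | P u] :|: [set u | Q u].
  by apply/setP => u; rewrite !inE.
rewrite cardsU.
have -> : [set u | P u] :&: [set u | Q u] = set0.
  by apply/setP => u; rewrite !inE; case Pu: (P u) => //=; rewrite (negbTE (H u Pu)).
by rewrite cards0 subn0.
Qed.

Section ATlem.
Variables (T : finType) (e : rel T) (esym : symmetric e) (Ar : {set T * T}).
Hypothesis HA1 : forall a, a \in Ar -> e a.1 a.2.
Hypothesis HA2 : forall x y, e x y -> ((x, y) \in Ar) != ((y, x) \in Ar).

Lemma Ar_asym x y : (x, y) \in Ar -> (y, x) \notin Ar.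
Proof. by move=> H; have := HA2 (HA1 H); rewrite H; case: ((y,x) \in Ar). Qed.

Definition Df (f : {ffun T * T -> bool}) : rel T := fun x y =>
  (((x, y) \in Ar) && f (x, y)) || (((y, x) \in Ar) && ~~ f (y, x)).

Definition od (f : {ffun T * T -> bool}) (v : T) :=
  #|[set a in Ar | (if f a then a.1 else a.2) == v]|.

Lemma Df_e f x y : Df f x y -> e x y.
Proof.
by rewrite /Df => /orP [/andP [/HA1 //] | /andP [/HA1 /=]]; rewrite esym.
Qed.

Lemma Df_asym f x y : Df f x y -> ~~ Df f y x.
Proof.
rewrite /Df; case Hxy: ((x, y) \in Ar); case Hyx: ((y, x) \in Ar) => //=.
all: try by have := Ar_asym Hxy; rewrite Hyx.
all: by case: (f _).
Qed.

Lemma Df_orient f : orientation e setT (Df f).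
Proof.
split => [x y H | x y _ _ Hxy]; first by rewrite !inE (Df_e H).
rewrite /Df; have := HA2 Hxy.
by case: ((x, y) \in Ar); case: ((y, x) \in Ar) => //= _; rewrite ?orbF ?andbT; case: (f _).
Qed.

Lemma Df_outdeg f v : outdeg (Df f) setT v = od f v.
Proof.
rewrite /outdeg /od.
have -> : [set u in setT | Df f v u] =
   (fun a => if f a then a.2 else a.1) @: [set a in Ar | (if f a then a.1 else a.2) == v].
  apply/setP => u; rewrite !inE /=; apply/idP/imsetP.
    rewrite /Df => /orP [/andP [H1 H2] | /andP [H1 H2]].
      by exists (v, u); [rewrite in_set /= H1 H2 /= | rewrite H2].
    by exists (u, v); [rewrite in_set /= H1 (negbTE H2) /= | rewrite (negbTE H2)].
  move=> [[a1 a2]]; rewrite in_set /= /Df => /andP [Ha Hv] ->.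
  by case Hf: (f (a1, a2)) Hv => /= /eqP <-; rewrite ?Ha ?Hf ?orbT.
apply: card_in_imset => [[a1 a2] [b1 b2]]; rewrite !inE /=.
move=> /andP [Ha Hav] /andP [Hb Hbv].
case Hfa: (f (a1, a2)) Hav; case Hfb: (f (b1, b2)) Hbv => /= /eqP Hb' /eqP Ha' Heq; subst.
- by [].
- by have := Ar_asym Ha; rewrite Hb.
- by have := Ar_asym Ha; rewrite Hb.
- by [].
Qed.

Local Open Scope ring_scope.

Definition validA (g : {ffun T * T -> bool}) := [forall a, (a \notin Ar) ==> g a].
Definition negcA (g : {ffun T * T -> bool}) := #|[set a in Ar | ~~ g a]|.

Lemma sign_prod (g : {ffun T * T -> bool}) :
  (-1) ^+ negcA g = \prod_(a in Ar) (if g a then 1 else -1) :> rat.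
Proof.
rewrite (eq_bigr (fun a => if ~~ g a then -1 else 1)); last by move=> a _; case: (g a).
rewrite -big_mkcondr prodr_const /negcA; congr (_ ^+ _).
by apply: eq_card => a; rewrite !inE.
Qed.

Variable f0 : {ffun T * T -> bool}.
Notation D := (Df f0).
Definition Dset := [set p : T * T | D p.1 p.2].

Definition Phi (A : {set T * T}) : {ffun T * T -> bool} :=
  [ffun a => if a \in Ar then (if f0 a then a \notin A else (a.2, a.1) \in A) else true].
Definition Psi (g : {ffun T * T -> bool}) : {set T * T} :=
  [set a | D a.1 a.2 && (if a \in Ar then ~~ g a else g (a.2, a.1))].

Lemma PhiPsi g : validA g -> Phi (Psi g) = g.
Proof.
move=> /forallP Hg; apply/ffunP => [[a1 a2]]; rewrite ffunE /=.
case Ha: ((a1, a2) \in Ar); last by have := Hg (a1, a2); rewrite Ha.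
rewrite !inE /= /Df Ha /= (negbTE (Ar_asym Ha)) /=.
by case Hf: (f0 (a1, a2)) => /=; rewrite ?negbK.
Qed.

Lemma PsiPhi A : Psi (Phi A) = A :&: Dset.
Proof.
apply/setP => [[a1 a2]]; rewrite !inE /=.
case HD: (D a1 a2); rewrite ?andbF //= andbT.
move: HD; rewrite /Df !ffunE /=.
case Ha: ((a1, a2) \in Ar) => /=.
  rewrite (negbTE (Ar_asym Ha)) /= orbF => ->; by rewrite negbK.
by move=> /andP [-> /negbTE ->].
Qed.

Lemma Df_Phi (A : {set T * T}) : A \subset Dset -> forall v u,
  Df (Phi A) v u = (D v u && ((v, u) \notin A)) || ((u, v) \in A).
Proof.
move=> /subsetP HA v u.
have HuvD : (u, v) \in A -> D u v by move=> /HA; rewrite inE.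
rewrite /Df !ffunE /=.
case Hvu: ((v, u) \in Ar); case Huv: ((u, v) \in Ar) => /=.
all: try by have := Ar_asym Hvu; rewrite Huv.
all: case HuvA: ((u, v) \in A); case HA1': ((v, u) \in A);
     try (case Hf: (f0 (v, u))); try (case Hf': (f0 (u, v))) => //=.
all: try (by have := HuvD HuvA; rewrite /Df Huv Hvu ?Hf ?Hf' ?andbF).
Qed.

Lemma cardT_set (P : pred T) : #|[set u in setT | P u]| = #|[set u | P u]|.
Proof. by apply: eq_card => u; rewrite !inE. Qed.

Lemma od_Phi (A : {set T * T}) v : A \subset Dset ->
  (od (Phi A) v + #|[set u | (v, u) \in A]| = od f0 v + #|[set u | (u, v) \in A]|)%N.
Proof.
move=> HA; have HA' := subsetP HA.
rewrite -!Df_outdeg /outdeg !cardT_set.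
rewrite (eq_card (B := [set u | (D v u && ((v, u) \notin A)) || ((u, v) \in A)])); last first.
  by move=> u; rewrite !inE Df_Phi.
rewrite [in RHS](eq_card (B := [set u | (D v u && ((v, u) \notin A)) || ((v, u) \in A)])); last first.
  move=> u; rewrite !inE; case Hvu: ((v, u) \in A); rewrite ?orbT ?andbT ?orbF //.
  by have := HA' _ Hvu; rewrite inE => ->.
rewrite !card_or; first lia.
- by move=> u /andP [_ /negbTE ->].
- move=> u /andP [Hd _]; apply/negP => /HA'; rewrite inE /= => Hd'.
  by have := Df_asym Hd; rewrite Hd'.
Qed.

Lemma cnt1 (A : {set T * T}) v : #|[set p in A | p.1 == v]| = #|[set u | (v, u) \in A]|.
Proof.
have -> : [set p in A | p.1 == v] = (fun u => (v, u)) @: [set u | (v, u) \in A].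
  apply/setP => [[a1 a2]]; rewrite !inE /=; apply/idP/imsetP.
    by move=> /andP [Ha /eqP Hv]; subst; exists a2; rewrite ?inE.
  by move=> [u]; rewrite inE => Hu [-> ->]; rewrite Hu eqxx.
by rewrite card_imset // => x y [].
Qed.

Lemma cnt2 (A : {set T * T}) v : #|[set p in A | p.2 == v]| = #|[set u | (u, v) \in A]|.
Proof.
have -> : [set p in A | p.2 == v] = (fun u => (u, v)) @: [set u | (u, v) \in A].
  apply/setP => [[a1 a2]]; rewrite !inE /=; apply/idP/imsetP.
    by move=> /andP [Ha /eqP Hv]; subst; exists a1; rewrite ?inE.
  by move=> [u]; rewrite inE => Hu [-> ->]; rewrite Hu eqxx.
by rewrite card_imset // => x y [].
Qed.

Lemma cond_Phi (A : {set T * T}) :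
  (validA (Phi A) && [forall v, od (Phi A) v == od f0 v]) && (Psi (Phi A) == A)
  = eulerian D A.
Proof.
rewrite PsiPhi /eulerian.
have -> : validA (Phi A) by apply/forallP => a; apply/implyP => Ha; rewrite ffunE (negbTE Ha).
have -> : (A :&: Dset == A) = (A \subset [set p | D p.1 p.2]).
  by apply/eqP/idP => [<-|/setIidPl //]; apply: subsetIr.
case HA: (A \subset _); rewrite ?andbF //= andbT.
apply/forallP/forallP => H v; have E := od_Phi v HA; move: (H v);
  rewrite ?cnt1 ?cnt2 => /eqP H'; apply/eqP; rewrite ?cnt1 ?cnt2.
  by move: E; rewrite H' => /addnI.
by move: E; rewrite H' => /addIn.
Qed.

Definition rho (a : T * T) := if f0 a then a else (a.2, a.1).

Lemma rho_inj : {in Ar &, injective rho}.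
Proof.
move=> [a1 a2] [b1 b2] Ha Hb; rewrite /rho /=.
case: (f0 (a1, a2)); case: (f0 (b1, b2)) => /=.
all: case=> E1 E2; subst => //.
all: by have := Ar_asym Hb; rewrite Ha.
Qed.

Lemma rho_img : rho @: Ar = Dset.
Proof.
apply/setP => [[p1 p2]]; rewrite inE /= /Df; apply/imsetP/idP.
  move=> [[a1 a2] Ha]; rewrite /rho /=; case Hf: (f0 (a1, a2)); case=> -> ->.
    by rewrite Ha Hf.
  by rewrite Ha Hf orbT.
move=> /orP [/andP [H1 H2] | /andP [H1 H2]].
  by exists (p1, p2) => //; rewrite /rho H2.
by exists (p2, p1) => //; rewrite /rho (negbTE H2).
Qed.

Lemma sign_Phi (A : {set T * T}) : A \subset Dset ->
  (-1) ^+ negcA (Phi A) = (-1) ^+ negcA f0 * (-1) ^+ #|A| :> rat.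
Proof.
move=> HA.
suff H : (-1) ^+ negcA (Phi A) * (-1) ^+ negcA f0 = (-1) ^+ #|A| :> rat.
  by rewrite -H mulrCA -expr2 sqrr_sign mulr1.
rewrite !sign_prod -big_split /=.
rewrite (eq_bigr (fun a => (fun p => if p \in A then -1 else 1) (rho a))); last first.
  move=> [a1 a2] Ha; rewrite /rho ffunE Ha /=.
  by case: (f0 (a1, a2)); case: ((_, _) \in A) => /=; rewrite ?mulr1 ?mulrNN ?mul1r.
rewrite -(big_imset (fun p => if p \in A then -1 else 1) rho_inj) /= rho_img.
rewrite (eq_bigr (fun p => if p \in A then -1 else 1)) // -big_mkcondr /= prodr_const.
congr (_ ^+ _); apply: eq_card => p; rewrite unfold_in /=.
by case Hp: (p \in A); rewrite ?andbF ?andbT //; move/subsetP: HA => /(_ p Hp).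
Qed.

Lemma Zlemma :
  \sum_(g | validA g && [forall v, od g v == od f0 v]) (-1) ^+ negcA g
  = (-1) ^+ negcA f0 * ((EE D)%:R - (EO D)%:R) :> rat.
Proof.
rewrite (reindex_onto Phi Psi); last by move=> g /andP [Hv _]; exact: PhiPsi.
rewrite (eq_bigl (fun A => eulerian D A)); last by move=> A; rewrite cond_Phi.
rewrite (eq_bigr (fun A : {set T * T} => (-1) ^+ negcA f0 * (-1) ^+ #|A|)); last first.
  by move=> A /andP [HA _]; exact: sign_Phi.
rewrite -big_distrr /=; congr (_ * _).
rewrite (bigID (fun A : {set T * T} => odd #|A|)) /= addrC.
rewrite (eq_bigr (fun _ : {set T * T} => 1)); last by move=> A /andP [_ /negbTE]; rewrite -signr_odd => ->.
rewrite [X in _ + X](eq_bigr (fun _ : {set T * T} => -1)); last by move=> A /andP [_]; rewrite -signr_odd => ->.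
have E1 : #|[set A | eulerian D A & ~~ odd #|A|]| = #|(fun A : {set T * T} => eulerian D A && ~~ odd #|A|)|.
  by apply: eq_card => A; rewrite !inE.
have E2 : #|[set A | eulerian D A & odd #|A|]| = #|(fun A : {set T * T} => eulerian D A && odd #|A|)|.
  by apply: eq_card => A; rewrite !inE.
by rewrite !sumr_const /EE /EO mulNrn E1 E2.
Qed.

End ATlem.


Section CN.
Variables (T : finType) (e : rel T) (esym : symmetric e) (t : nat).
Hypothesis ht : (0 < t)%N.
Variable phi : T -> 'I_t * bool.
Hypothesis phi_inj : injective phi.
Hypothesis Hphi : forall x y, e x y -> (phi x).1 != (phi y).1.

Notation V := ('I_t * bool)%type.
Definition Ar := [set a : T * T | e a.1 a.2 && ((phi a.1).1 < (phi a.2).1)%N].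

Lemma HA1 a : a \in Ar -> e a.1 a.2.
Proof. by rewrite inE => /andP []. Qed.

Lemma HA2 x y : e x y -> ((x, y) \in Ar) != ((y, x) \in Ar).
Proof.
move=> Hxy; rewrite !inE /= Hxy (esym y x) Hxy /=.
have := Hphi Hxy; case: ltngtP => //= H.
by move/val_inj: H => ->; rewrite eqxx.
Qed.

Definition AK := [set a : V * V | (a.1.1 < a.2.1)%N].
Definition pmap (a : T * T) : V * V := (phi a.1, phi a.2).
Definition AG := pmap @: Ar.
Definition AQ := AK :\: AG.

Lemma pmap_inj : injective pmap.
Proof. by move=> [a1 a2] [b1 b2] [/phi_inj -> /phi_inj ->]. Qed.

Lemma AG_sub : AG \subset AK.
Proof.
apply/subsetP => p /imsetP [a]; rewrite inE => /andP [_ H] ->.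
by rewrite inE.
Qed.

Lemma sum_fib (I J : finType) (A : {set I}) (h : I -> J) :
  (\sum_(w : J) #|[set a in A | h a == w]| = #|A|)%N.
Proof.
rewrite -sum1_card (partition_big h predT) //=; apply: eq_bigr => w _.
by rewrite sum1_card; apply: eq_card => a; rewrite !inE.
Qed.

Lemma card_V : #|{: V}| = (2 * t)%N.
Proof. by rewrite card_prod card_ord card_bool mulnC. Qed.

Lemma card_AK : #|AK| = (#|{: V}| * t.-1)%N.
Proof.
pose X := (\sum_(i : 'I_t) \sum_(j : 'I_t) ((i : nat) < j)%N)%N.
have H1 : #|AK| = (4 * X)%N.
  rewrite /AK -sum1dep_card big_mkcond /=.
  rewrite -(pair_bigA _ (fun u v : V => if (u.1 < v.1)%N then 1%N else 0%N)) /=.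
  rewrite -(pair_bigA _ (fun (i : 'I_t) (b : bool) => \sum_(v : V) if (i < v.1)%N then 1%N else 0%N)) /=.
  rewrite /X big_distrr /=; apply: eq_bigr => i _.
  rewrite big_bool /=.
  rewrite -(pair_bigA _ (fun (j : 'I_t) (b : bool) => if (i < j)%N then 1%N else 0%N)) /=.
  rewrite -big_split big_distrr /=; apply: eq_bigr => j _.
  by rewrite big_bool /=; case: (i < j)%N.
have H2 : (2 * X + t = t * t)%N.
  have E : forall i j : 'I_t, (((i : nat) < j) + ((j : nat) < i) + (i == j) = 1)%N.
    by move=> i j; rewrite -(inj_eq val_inj) /=; case: ltngtP.
  have Hd : (\sum_(i : 'I_t) \sum_(j : 'I_t) (i == j) = t)%N.
    rewrite -[RHS]card_ord -sum1_card; apply: eq_bigr => i _.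
    rewrite (bigD1 i) //= eqxx big1 //= => j /negbTE; by rewrite eq_sym => ->.
  have Hs : (\sum_(i : 'I_t) \sum_(j : 'I_t) ((j : nat) < i) = X)%N.
    by rewrite /X exchange_big.
  have : (\sum_(i : 'I_t) \sum_(j : 'I_t) (((i : nat) < j) + ((j : nat) < i) + (i == j)) = t * t)%N.
    rewrite (eq_bigr (fun _ => t)); last first.
      move=> i _; rewrite (eq_bigr (fun _ => 1%N)); last by move=> j _; rewrite E.
      by rewrite sum1_card card_ord.
    by rewrite sum_nat_const card_ord.
  rewrite (eq_bigr (fun i : 'I_t => \sum_(j : 'I_t) ((i : nat) < j) + \sum_(j : 'I_t) ((j : nat) < i) + \sum_(j : 'I_t) (i == j)))%N; last first.
    by move=> i _; rewrite -!big_split.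
  rewrite !big_split /= Hs Hd -/X; lia.
rewrite H1 card_V -subn1; nia.
Qed.

Lemma card_Ar_AQ : (#|Ar| + #|AQ|)%N = #|AK|.
Proof.
rewrite /AQ cardsDS ?AG_sub // /AG card_imset; last exact: pmap_inj.
have := subset_leq_card AG_sub; rewrite /AG card_imset; last exact: pmap_inj.
lia.
Qed.

Local Open Scope ring_scope.

Lemma prodS (n : V -> nat) : (\sum_(w : V) n w = #|{: V}| * t.-1)%N ->
  \prod_(w : V) Ssum t (n w) = ([forall w, n w == t.-1])%:R.
Proof.
move=> Hs; case: (boolP [forall w, n w == t.-1]) => H.
  rewrite big1 // => w _; move/forallP: H => /(_ w) /eqP ->.
  by rewrite Ssum_val // eqxx.
case: (pickP (fun w => n w < t.-1)%N) => [w0 Hw0 | Hnone].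
  rewrite (bigD1 w0) //= Ssum_val ?(ltnW Hw0) // (ltn_eqF Hw0) mul0r.
  by [].
exfalso; move/negP: H; apply; apply/forallP => w.
have Hge : forall w, (t.-1 <= n w)%N by move=> w'; rewrite leqNgt Hnone.
have E : (\sum_(w : V) n w = \sum_(w : V) (n w - t.-1) + #|{: V}| * t.-1)%N.
  rewrite -sum_nat_const -big_split /=; apply: eq_bigr => w' _.
  by rewrite subnK.
have : (\sum_(w : V) (n w - t.-1) == 0)%N by move: E; rewrite Hs; lia.
rewrite sum_nat_eq0 => /forallP /(_ w) /=; rewrite subn_eq0 => Hle.
by rewrite eqn_leq Hle Hge.
Qed.

Definition Xv (x : {ffun V -> 'I_t}) (w : V) : rat := nR (x w).
Definition PK (x : {ffun V -> 'I_t}) := \prod_(a in AK) (Xv x a.1 - Xv x a.2).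
Definition den (x : {ffun V -> 'I_t}) := \prod_(w : V) phid (x w).
Definition CN := \sum_(x : {ffun V -> 'I_t}) PK x / den x.

Lemma PK_split x : PK x = (\prod_(a in Ar) (Xv x (phi a.1) - Xv x (phi a.2))) *
   \prod_(a in AQ) (Xv x a.1 - Xv x a.2).
Proof.
rewrite /PK (bigID (fun a => a \in AG)) /=; congr (_ * _).
  rewrite (eq_bigl (fun a => a \in AG)); last first.
    by move=> a; apply/andb_idl => /(subsetP AG_sub).
  by rewrite /AG big_imset //= => a b _ _; exact: pmap_inj.
by apply: eq_bigl => a; rewrite /AQ !inE andbC.
Qed.

Definition dG (f : {ffun T * T -> bool}) (w : V) :=
  #|[set a in Ar | (if f a then phi a.1 else phi a.2) == w]|.
Definition dQ (g : {ffun V * V -> bool}) (w : V) :=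
  #|[set a in AQ | (if g a then a.1 else a.2) == w]|.

Lemma sum_dGdQ f g : (\sum_(w : V) (dG f w + dQ g w) = #|{: V}| * t.-1)%N.
Proof.
rewrite big_split /= /dG /dQ.
rewrite (sum_fib Ar (fun a => if f a then phi a.1 else phi a.2)).
by rewrite (sum_fib AQ (fun a => if g a then a.1 else a.2)) card_Ar_AQ card_AK.
Qed.

Lemma CN_expand : CN = \sum_(f | valid Ar f) \sum_(g | valid AQ g)
   ((-1) ^+ negc Ar f * (-1) ^+ negc AQ g) * ([forall w, dG f w + dQ g w == t.-1]%N)%:R.
Proof.
rewrite /CN.
transitivity (\sum_(x : {ffun V -> 'I_t}) \sum_(f | valid Ar f) \sum_(g | valid AQ g)
   ((-1) ^+ negc Ar f * (-1) ^+ negc AQ g) *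
   \prod_(w : V) (nR (x w) ^+ (dG f w + dQ g w) / phid (x w))).
  apply: eq_bigr => x _.
  rewrite PK_split (expand _ (fun a => phi a.1) (fun a => phi a.2)).
  rewrite (expand _ (fun a => a.1) (fun a => a.2)) /= mulr_suml mulr_suml.
  apply: eq_bigr => f Hf; rewrite mulr_sumr mulr_suml; apply: eq_bigr => g Hg.
  have -> : \prod_(w : V) (nR (x w) ^+ (dG f w + dQ g w) / phid (x w)) =
     (\prod_(w : V) Xv x w ^+ dG f w) * (\prod_(w : V) Xv x w ^+ dQ g w) / den x.
    rewrite /den -prodfV -!big_split /=; apply: eq_bigr => w _.
    by rewrite /Xv exprD.
  rewrite /dG /dQ; ring.
rewrite exchange_big /=; apply: eq_bigr => f Hf.
rewrite exchange_big /=; apply: eq_bigr => g Hg.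
rewrite -big_distrr /=; congr (_ * _).
rewrite -(bigA_distr_bigA (fun (w : V) (c : 'I_t) => nR c ^+ (dG f w + dQ g w) / phid c)) /=.
exact: prodS (sum_dGdQ f g).
Qed.

Lemma prodV2 (P : 'I_t -> rat) : \prod_(u : V) P u.1 = (\prod_(i : 'I_t) P i) ^+ 2.
Proof.
rewrite -(pair_bigA _ (fun (i : 'I_t) (b : bool) => P i)) /= expr2 -big_split /=.
by apply: eq_bigr => i _; rewrite big_bool.
Qed.

Lemma pos_struct (x : {ffun V -> 'I_t}) : PK x != 0 -> (0 <= PK x) && (0 < den x).
Proof.
move=> HP.
have Hne : forall u v : V, (u.1 < v.1)%N -> x u != x v.
  move=> u v Huv; move/prodf_neq0: HP => /(_ (u, v)); rewrite inE /= => /(_ Huv).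
  by rewrite subr_eq0 /Xv; apply: contra => /eqP ->.
have Hne' : forall u v : V, u.1 != v.1 -> x u != x v.
  move=> u v; rewrite -(inj_eq val_inj) /=; case: ltngtP => // H _.
    exact: Hne.
  by rewrite eq_sym; exact: Hne.
have Hc : forall i, x (i, true) = x (i, false).
  move=> i0; apply/eqP; apply/negPn/negP => Hd.
  pose g (o : option 'I_t) := if o is Some i then x (i, false) else x (i0, true).
  have gi : injective g.
    move=> [i|] [j|] //= /eqP E; apply/eqP.
    - have [->//|Hij] := eqVneq i j.
      by move: E; rewrite (negbTE (Hne' (i, false) (j, false) Hij)).
    - have [Hij|Hij] := eqVneq i i0; first by move: E; rewrite Hij eq_sym (negbTE Hd).
      by move: E; rewrite (negbTE (Hne' (i, false) (i0, true) Hij)).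
    - have [Hij|Hij] := eqVneq i0 j; first by move: E; rewrite -Hij (negbTE Hd).
      by move: E; rewrite (negbTE (Hne' (i0, true) (j, false) Hij)).
  by have := leq_card g gi; rewrite card_option card_ord ltnn.
have Hxu : forall u : V, x u = x (u.1, false).
  by move=> [i []] //=; rewrite Hc.
apply/andP; split.
  pose H (i j : 'I_t) := if (i < j)%N then nR (x (i, false)) - nR (x (j, false)) else 1.
  have -> : PK x = \prod_(u : V) \prod_(v : V) H u.1 v.1.
    rewrite pair_bigA /PK big_mkcond /=.
    apply: eq_bigr => [[u v]] _.
    by rewrite inE /= /H /Xv (Hxu u) (Hxu v).
  rewrite (eq_bigr (fun u : V => (\prod_(j : 'I_t) H u.1 j) ^+ 2)); last first.
    by move=> u _; rewrite (prodV2 (fun j => H u.1 j)).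
  by rewrite (prodV2 (fun i => (\prod_(j : 'I_t) H i j) ^+ 2)) sqr_ge0.
rewrite /den (eq_bigr (fun u : V => phid (x (u.1, false)))); last by move=> u _; rewrite Hxu.
rewrite (prodV2 (fun i => phid (x (i, false)))) lt_def sqr_ge0 andbT sqrf_eq0.
by apply/prodf_neq0 => i _; exact: phid_neq0.
Qed.

Lemma term_ge0 (x : {ffun V -> 'I_t}) : 0 <= PK x / den x.
Proof.
have [->|HP] := eqVneq (PK x) 0; first by rewrite mul0r.
by case/andP: (pos_struct HP) => H1 H2; rewrite divr_ge0 // ltW.
Qed.

Lemma CN_gt0 : 0 < CN.
Proof.
pose x0 : {ffun V -> 'I_t} := [ffun u => u.1].
have HP : PK x0 != 0.
  apply/prodf_neq0 => a; rewrite inE /Xv !ffunE => Ha.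
  rewrite subr_eq0; apply/negP => /eqP /(@nR_inj t) E.
  by move: Ha; rewrite E ltnn.
have Hpos : 0 < PK x0 / den x0.
  case/andP: (pos_struct HP) => H1 H2; apply: divr_gt0 => //.
  by rewrite lt_def HP H1.
rewrite /CN (bigD1 x0) //=.
have : 0 <= \sum_(x | x != x0) PK x / den x by apply: sumr_ge0 => x _; exact: term_ge0.
move: Hpos; set a := PK x0 / den x0; set b := \sum_(i | _) _; lra.
Qed.

Notation N := #|{: T * T}|.
Definition key (f : {ffun T * T -> bool}) : {ffun V -> 'I_N.+1} :=
  [ffun w => inord (dG f w)].

Lemma key_val f w : (key f w : nat) = dG f w.
Proof. by rewrite ffunE inordK // ltnS max_card. Qed.

Lemma dG_phi f v : dG f (phi v) = od Ar f v.
Proof.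
apply: eq_card => a; rewrite !inE; congr (_ && _).
by case: (f a); rewrite (inj_eq phi_inj).
Qed.

Lemma dG_out f w : (forall v, phi v != w) -> dG f w = 0%N.
Proof.
move=> H; apply: eq_card0 => a; rewrite !inE.
by case: (f a); rewrite (negbTE (H _)) andbF.
Qed.

Lemma key_eq f f0 : (key f == key f0) = [forall v, od Ar f v == od Ar f0 v].
Proof.
apply/eqP/forallP => [H v | H].
  by rewrite -!dG_phi -!key_val H.
apply/ffunP => w; apply: ord_inj; rewrite !key_val.
case: (pickP (fun v => phi v == w)) => [v /eqP <- | Hn].
  by rewrite !dG_phi; apply/eqP; exact: H.
by rewrite !dG_out // => v; rewrite Hn.
Qed.

Definition W (k : {ffun V -> 'I_N.+1}) : rat :=
  \sum_(g | valid AQ g) (-1) ^+ negc AQ g * ([forall w, (k w : nat) + dQ g w == t.-1]%N)%:R.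

Lemma part1 : AT e setT (fun _ => t).
Proof.
case: (boolP [exists f : {ffun T * T -> bool},
   [&& valid Ar f, [forall v, od Ar f v < t]%N & EE (Df Ar f) != EO (Df Ar f)]]) =>
   [/existsP [f /and3P [_ /forallP Hod HE]] | Hno].
  exists (Df Ar f); split; first exact: (Df_orient esym HA1 HA2).
  split => // v _; rewrite (Df_outdeg HA1 HA2); exact: Hod.
exfalso.
have HCN : CN = 0.
  rewrite CN_expand.
  transitivity (\sum_(f | valid Ar f) (-1) ^+ negc Ar f * W (key f)).
    apply: eq_bigr => f _; rewrite /W big_distrr; apply: eq_bigr => g _.
    have -> : [forall w, (key f w + dQ g w)%N == t.-1] = [forall w, (dG f w + dQ g w)%N == t.-1].
      by apply: eq_forallb => w; rewrite key_val.
    by rewrite /= mulrA.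
  rewrite (partition_big key predT) //=; apply: big1 => k _.
  rewrite (eq_bigr (fun f => (-1) ^+ negc Ar f * W k)); last by move=> f /andP [_ /eqP ->].
  rewrite -big_distrl /=.
  case: (pickP (fun f => valid Ar f && (key f == k))) => [f0 /andP [Hv0 /eqP Hk] | Hnone];
    last by rewrite big_pred0 // mul0r.
  have [-> | HW] := eqVneq (W k) 0; first by rewrite mulr0.
  case: (pickP (fun g => valid AQ g && [forall w, (k w : nat) + dQ g w == t.-1]%N))
    => [g /andP [_ /forallP Hg] | Hng]; last first.
    by move: HW; rewrite /W big1 ?eqxx // => g Hg; move: (Hng g); rewrite Hg /= => ->; rewrite mulr0.
  have Hod : forall v, (od Ar f0 v < t)%N.
    move=> v; rewrite -dG_phi -key_val Hk; move: (Hg (phi v)) => /eqP H.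
    have Hle : ((k (phi v) : nat) <= t.-1)%N by rewrite -H leq_addr.
    by apply: (leq_ltn_trans Hle); rewrite ltn_predL.
  have HE : EE (Df Ar f0) = EO (Df Ar f0).
    apply/eqP; move: Hno; rewrite negb_exists => /forallP /(_ f0).
    by rewrite Hv0 /=; apply: contraNT => HE; rewrite HE andbT; apply/forallP.
  rewrite (eq_bigl (fun f => validA Ar f && [forall v, od Ar f v == od Ar f0 v])); last first.
    by move=> f; rewrite -Hk key_eq.
  by rewrite (Zlemma HA1 HA2 f0) HE subrr mulr0 mul0r.
by have := CN_gt0; rewrite HCN ltxx.
Qed.

End CN.


Theorem mainTheorem3 (T : finType) (e : rel T)
  (esym : symmetric e) (eirr : irreflexive e) :
  (forall t : nat, 1 <= t -> subK2 e t -> AT e setT (fun _ => t)) /\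
  (BKfree e -> ~ subK2 e (maxdeg e - 1)).
Proof.
split.
  move=> t ht [phi [phi_inj Hphi]].
  exact: (part1 esym ht phi_inj Hphi).
move=> [[HT _] HBK] [phi [phi_inj Hphi]].
case/card_gt0P: HT => x0 _.
move: phi phi_inj Hphi.
case Hm: (maxdeg e - 1) => [|m] phi phi_inj Hphi.
  by case: (phi x0) => [[]].
have H1 := part1 esym (ltn0Sn m) phi_inj Hphi.
have Hne : [set: T] != set0 by apply/set0Pn; exists x0.
apply: (HBK setT Hne).1.
have Hf : forall v, fH e setT v = m.+1.
  move=> v; rewrite /fH subnKC; first by rewrite -subn1.
  by rewrite /maxdeg; apply: (@leq_bigmax T (fun v => deg e setT v)).  
move: H1 => [D [HD [Hout HEE]]]; exists D; split => //; split => // v Hv.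
by rewrite Hf; exact: Hout.
Qed.
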